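(* Let $G$ be a finite simple graph such that $Y_G\in\Gamma$. Then $G$ has no pair of disjoint edges. Furthermore, if $G$ is connected, then $G$ is either the triangle $C_3$ or the star graph $S_n$ for some $n\ge1$.
   Context: For a finite simple graph $G$, $X_G$ is its chromatic symmetric function (the sum over proper colorings $\kappa$ of $\prod_v x_{\kappa(v)}$), $\omega$ is the involution on symmetric functions with $\omega(p_r)=(-1)^{r-1}p_r$, and $Y_G=(X_G+\omega(X_G))/2$ is the near chromatic symmetric function. $\Gamma=\mathbb{Q}[p_1,p_3,p_5,\dots]$ where $p_r$ are power sums. Two edges $\{v_1,v_2\}$ and $\{v_3,v_4\}$ are disjoint if $v_1,v_2,v_3,v_4$ are all distinct. $C_3$ is the cycle on three vertices and $S_n$ is the tree on $n$ vertices with one internal vertex and $n-1$ leaves. *)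

(* Defs.v *)
From HB Require Import structures.
From mathcomp Require Import all_boot all_order all_algebra.
Set Implicit Arguments. Unset Strict Implicit. Unset Printing Implicit Defensive.
Import Order.TTheory GRing.Theory Num.Theory.
Local Open Scope ring_scope.

Definition simple_graph (V : finType) (e : rel V) : Prop :=
  irreflexive e /\ symmetric e.

Definition connected_graph (V : finType) (e : rel V) : Prop :=
  (0 < #|V|)%N /\ forall u v : V, connect e u v.

Definition has_disjoint_edges (V : finType) (e : rel V) : Prop :=
  exists a b c d : V, [/\ e a b, e c d & uniq [:: a; b; c; d]].

Definition is_triangle (V : finType) (e : rel V) : Prop :=
  #|V| = 3%N /\ forall u v : V, e u v = (u != v).

(* G is the star S_n, n = #|V| >= 1, with center c:
   the edges are exactly the pairs {c, v}, v <> c. *)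
Definition is_star (V : finType) (e : rel V) : Prop :=
  exists c : V, forall u v : V, e u v = (u != v) && ((u == c) || (v == c)).

(* ---------- Symmetric functions ----------
   An element of Lambda_Q is written in terms of power sums as a finite formal
   sum  sum_t  t.1 * p_{t.2_1} * ... * p_{t.2_k}  (t.2 a list of positive
   integers).  Two such expressions denote the same symmetric function iff
   their specializations to (x_1,...,x_N,0,0,...) agree for every N and every
   rational point x (this is exactly equality in Lambda_Q). *)
Definition psum := seq (rat * seq nat).

Definition psum_wf (F : psum) : bool :=
  all (fun t => all (fun r => 0 < r)%N t.2) F.

Definition pow_sum (N : nat) (x : 'I_N -> rat) (r : nat) : rat :=
  \sum_(j < N) x j ^+ r.

Definition psum_eval (N : nat) (x : 'I_N -> rat) (F : psum) : rat :=
  \sum_(t <- F) t.1 * \prod_(r <- t.2) pow_sum x r.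

(* omega(p_r) = (-1)^(r-1) p_r, extended as a ring homomorphism *)
Definition psum_omega (F : psum) : psum :=
  [seq (t.1 * (-1) ^+ (\sum_(r <- t.2) r.-1)%N, t.2) | t <- F].

(* Y = (F + omega F)/2 *)
Definition psum_near (F : psum) : psum :=
  [seq (t.1 / 2%:R, t.2) | t <- F ++ psum_omega F].

(* the symmetric function F lies in Gamma = Q[p_1, p_3, p_5, ...] *)
Definition in_Gamma (F : psum) : Prop :=
  exists Q : psum, all (fun t => all odd t.2) Q /\
    forall (N : nat) (x : 'I_N -> rat), psum_eval x Q = psum_eval x F.

Definition proper_col (V : finType) (e : rel V) (N : nat) (k : {ffun V -> 'I_N})
  : bool := [forall u, forall v, e u v ==> (k u != k v)].

Definition chrom_eval (V : finType) (e : rel V) (N : nat) (x : 'I_N -> rat) : rat :=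
  \sum_(k : {ffun V -> 'I_N} | proper_col e k) \prod_(v : V) x (k v).

Definition represents_XG (V : finType) (e : rel V) (F : psum) : Prop :=
  psum_wf F /\ forall (N : nat) (x : 'I_N -> rat), psum_eval x F = chrom_eval e x.

(* Main.v *)
Require Import Defs.
From HB Require Import structures.
From mathcomp Require Import all_boot all_order all_algebra zify ring.
Set Implicit Arguments. Unset Strict Implicit. Unset Printing Implicit Defensive.
Import Order.TTheory GRing.Theory Num.Theory.

Module Helpers.
Local Open Scope ring_scope.


Lemma poly_eq_nat (p q : {poly rat}) :
  (forall t : nat, (0 < t)%N -> p.[t%:R] = q.[t%:R]) -> p = q.
Proof.
move=> H; apply/eqP; rewrite -subr_eq0; apply/negPn/negP => Hn.
pose rs : seq rat := [seq (i.+1)%:R | i <- iota 0 (size (p - q))].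
have Ha : all (root (p - q)) rs.
  apply/allP => y /mapP [i _ ->]; rewrite /root hornerD hornerN H // subrr //.
have Hu : uniq rs.
  rewrite map_inj_uniq ?iota_uniq // => i j /eqP; rewrite eqr_nat => /eqP [] //.
have := max_poly_roots Hn Ha Hu.
by rewrite size_map size_iota ltnn.
Qed.

Definition polyF (F : psum) (al : nat -> rat) : {poly rat} :=
  \sum_(u <- F) u.1 *: \prod_(r <- u.2) (al r *: 'X).

Lemma polyF_horner F al t :
  (polyF F al).[t] = \sum_(u <- F) u.1 * \prod_(r <- u.2) (al r * t).
Proof.
rewrite /polyF horner_sum; apply: eq_bigr => u _.
rewrite hornerZ horner_prod; congr (_ * _); apply: eq_bigr => r _.
by rewrite hornerZ hornerX.
Qed.

Lemma psum_eval_polyF F al N (x : 'I_N -> rat) t :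
  (forall r, pow_sum x r = al r * t) -> psum_eval x F = (polyF F al).[t].
Proof.
move=> H; rewrite polyF_horner /psum_eval; apply: eq_bigr => u _.
by congr (_ * _); apply: eq_bigr => r _.
Qed.

Lemma expr_sum_seq (l : seq nat) (z : rat) :
  z ^+ (\sum_(r <- l) r.-1)%N = \prod_(r <- l) z ^+ r.-1.
Proof. by elim: l => [|r l IH]; rewrite ?big_nil ?big_cons ?expr0 // exprD IH. Qed.

Lemma omega_eval F N (x : 'I_N -> rat) :
  psum_eval x (psum_omega F) =
  \sum_(u <- F) u.1 * \prod_(r <- u.2) ((-1) ^+ r.-1 * pow_sum x r).
Proof.
rewrite /psum_eval /psum_omega big_map; apply: eq_bigr => u _ /=.
by rewrite expr_sum_seq -mulrA big_split.
Qed.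

Lemma near_eval F N (x : 'I_N -> rat) :
  psum_eval x (psum_near F) =
  (psum_eval x F + psum_eval x (psum_omega F)) / 2%:R.
Proof.
rewrite /psum_eval /psum_near big_map big_cat /= mulrDl !mulr_suml.
by congr (_ + _); apply: eq_bigr => u _; rewrite mulrAC.
Qed.

Lemma polyF_const_coef (Q : psum) (c : rat) j :
  (polyF Q (fun _ => c))`_j =
  c ^+ j * \sum_(u <- Q) u.1 * (size u.2 == j)%:R.
Proof.
rewrite /polyF coef_sum mulr_sumr; apply: eq_bigr => u _.
have -> : \prod_(r <- u.2) (c *: 'X) = (c *: 'X) ^+ size u.2.
  by elim: (u.2) => [|r l IH]; rewrite ?big_nil ?big_cons ?expr0 // IH exprS.
rewrite coefZ exprZn coefZ coefXn eq_sym; case: eqP => [->|_]. by rewrite mulrCA.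
by rewrite !mulr0.
Qed.


Section Blocks.
Variables (V : finType) (N : nat) (x : 'I_N -> rat) (j0 : 'I_N).
Variable R : rel V.
Hypothesis Req : equivalence_rel R.
Let P := equivalence_partition R [set: V].

Lemma Req_in : {in [set: V] & &, equivalence_rel R}.
Proof. by move=> u v w _ _ _; apply: Req. Qed.

Lemma partP : partition P [set: V].
Proof. exact: equivalence_partitionP Req_in. Qed.

Lemma coverP : cover P = [set: V].
Proof. by have /and3P[/eqP -> _ _] := partP. Qed.

Lemma trivP : trivIset P.
Proof. by have /and3P[_ -> _] := partP. Qed.

Lemma nset0P : set0 \notin P.
Proof. by have /and3P[_ _ ->] := partP. Qed.

Lemma pblockR u v : (v \in pblock P u) = R u v.
Proof. by apply: pblock_equivalence_partition; rewrite ?in_setT //; apply: Req_in. Qed.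

Lemma pblockP u : pblock P u \in P.
Proof. by apply: pblock_mem; rewrite coverP in_setT. Qed.

Lemma pblock_self u : u \in pblock P u.
Proof. by rewrite mem_pblock coverP in_setT. Qed.

Lemma pblock_eq u v : R u v -> pblock P v = pblock P u.
Proof. by move=> Ruv; apply: def_pblock; rewrite ?trivP ?pblockP ?pblockR. Qed.

Lemma pick_block C : C \in P -> exists2 v, [pick v in C] = Some v & pblock P v = C.
Proof.
move=> CP; case: pickP => [v vC|H]; first by exists v => //; apply: def_pblock; rewrite ?trivP.
have C0 : C = set0 by apply/setP => v; rewrite in_set0 H.
by move: nset0P; rewrite -C0 CP.
Qed.

Lemma blocks_sum :
  \sum_(k : {ffun V -> 'I_N} | [forall u, forall v, R u v ==> (k u == k v)])
     \prod_v x (k v)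
  = \prod_(C in P) pow_sum x #|C|.
Proof.
rewrite /pow_sum (big_distr_big_dep j0 (mem P) (fun _ _ => true)) /=.
pose h (g : {ffun {set V} -> 'I_N}) := [ffun v => g (pblock P v)].
pose h' (k : {ffun V -> 'I_N}) :=
  [ffun C => if C \in P then (if [pick v in C] is Some v then k v else j0) else j0].
rewrite (reindex_onto h h') /=; last first.
  move=> k /forallP cck; apply/ffunP => v; rewrite !ffunE pblockP.
  case: pickP => [w wv|H]; last by move: (H v); rewrite pblock_self.
  move: wv; rewrite pblockR => Rvw.
  by have /forallP/(_ w)/implyP/(_ Rvw)/eqP := cck v.
apply: eq_big => g.
  apply/andP/idP => [[_ /eqP hg]|gP].
    apply/pfamilyP; split; last by [].
    apply/subsetP => C; rewrite inE -hg ffunE; apply: contraR => CP.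
    by rewrite (negPf CP) eqxx.
  split.
    apply/forallP => u; apply/forallP => v; apply/implyP => Ruv.
    by rewrite !ffunE (pblock_eq Ruv).
  apply/eqP/ffunP => C; rewrite !ffunE; case: ifP => CP.
    by have [v -> <-] := pick_block CP; rewrite ffunE.
  case/pfamilyP: gP => /subsetP sup _; apply/esym/eqP; apply: contraFT CP.
  exact: sup.
move=> _.
have -> : \prod_v x (h g v) = \prod_(v in cover P) x (g (pblock P v)).
  by rewrite coverP; apply: eq_big => [v|v _]; rewrite ?in_setT ?ffunE.
rewrite big_trivIset ?trivP //; apply: eq_bigr => C CP.
rewrite -prodr_const; apply: eq_bigr => v vC.
by rewrite (def_pblock trivP CP vC).
Qed.

End Blocks.


Section Graph.
Variables (V : finType) (e : rel V).
Hypothesis sg : simple_graph e.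

Definition edges : {set {set V}} :=
  [set A : {set V} | [exists u, exists v, e u v && (A == [set u; v])]].

Definition rS (S : {set {set V}}) : rel V := fun u v => [set u; v] \in S.

Lemma rS_sym S : symmetric (rS S).
Proof. by move=> u v; rewrite /rS setUC. Qed.

Lemma cS_sym S : connect_sym (rS S).
Proof. exact/sym_connect_sym/rS_sym. Qed.

Lemma cS_equiv S : equivalence_rel (connect (rS S)).
Proof.
move=> u v w; split; first exact: connect0.
move=> Cuv; apply/idP/idP => H; first by apply: connect_trans H; rewrite cS_sym.
exact: connect_trans Cuv H.
Qed.

Definition part S := equivalence_partition (connect (rS S)) [set: V].

Lemma edgesP A : reflect (exists u v, [/\ e u v, u != v & A = [set u; v]]) (A \in edges).
Proof.
rewrite inE; apply: (iffP existsP) => [[u /existsP [v /andP [euv /eqP ->]]]|[u [v [euv _ ->]]]].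
  exists u, v; split => //; apply: contraTneq euv => ->; case: sg => irr _; by rewrite irr.
by exists u; apply/existsP; exists v; rewrite euv eqxx.
Qed.

Section Col.
Variable N : nat.
Definition constk (k : {ffun V -> 'I_N}) (A : {set V}) :=
  [forall u in A, forall v in A, k u == k v].

Lemma const2 k u v : constk k [set u; v] = (k u == k v).
Proof.
apply/forallP/idP => [H|/eqP H w].
  by have /implyP/(_ (set21 u v))/forallP/(_ v)/implyP/(_ (set22 u v)) := H u.
apply/implyP => /set2P wuv; apply/forallP => w'; apply/implyP => /set2P w'uv.
by case: wuv w'uv => -> [] ->; rewrite ?H.
Qed.

Lemma cc_equiv (S : {set {set V}}) (k : {ffun V -> 'I_N}) : S \subset edges ->
  [forall A in S, constk k A] =
  [forall u, forall v, connect (rS S) u v ==> (k u == k v)].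
Proof.
move=> /subsetP SE; apply/forallP/forallP => H.
  move=> u; apply/forallP => v; apply/implyP => /connectP [p pth ->].
  elim: p u pth => [|w p IH] u /=; first by rewrite eqxx.
  case/andP => ruw pth; have := IH _ pth => /eqP <-.
  by have /implyP/(_ ruw) := H [set u; w]; rewrite const2.
move=> A; apply/implyP => AS; have /edgesP [u [v [_ _ defA]]] := SE _ AS.
have ruv : rS S u v by rewrite /rS -defA.
rewrite defA const2.
by have /forallP/(_ v)/implyP := H u; apply; apply: connect1.
Qed.

Lemma prod_ind (I : finType) (A : pred I) (b : I -> bool) :
  \prod_(i in A) ((b i)%:R : rat) = ([forall i in A, b i])%:R.
Proof.
case: (pickP [pred i in A | ~~ b i]) => [i /andP [iA /negPf bi]|H].
  have -> : [forall i in A, b i] = false.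
    by apply/negP => /forallP/(_ i)/implyP/(_ iA); rewrite bi.
  by rewrite (bigD1 i) //= bi mul0r.
have -> : [forall i in A, b i].
  by apply/forallP => i; apply/implyP => iA; have := H i; rewrite /= iA /= => /negbFE.
by apply: big1 => i iA; have := H i; rewrite /= iA /= => /negbFE ->.
Qed.

Lemma proper_ind (k : {ffun V -> 'I_N}) :
  ((proper_col e k)%:R : rat) =
  \prod_(A : {set V}) ((if A \in edges then - ((constk k A)%:R) else 0) + 1).
Proof.
case: (boolP (proper_col e k)) => [/forallP Hp|].
  symmetry; apply: big1 => A _; case: edgesP => [[u [v [euv _ ->]]]|_].
    rewrite const2; have /forallP/(_ v)/implyP/(_ euv)/negPf -> := Hp u.
    by rewrite oppr0 add0r.
  by rewrite add0r.
move=> /forallPn [u /forallPn [v]]; rewrite negb_imply negbK.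
case/andP => euv kuv; rewrite (bigD1 [set u; v]) //=.
have -> : [set u; v] \in edges by apply/edgesP; exists u, v; split => //;
  apply: contraTneq euv => ->; case: sg => irr _; by rewrite irr.
by rewrite const2 kuv addNr mul0r.
Qed.

Lemma chrom_expand (x : 'I_N -> rat) (j0 : 'I_N) :
  chrom_eval e x = \sum_(S : {set {set V}} | S \subset edges)
      (-1) ^+ #|S| * \prod_(C in part S) pow_sum x #|C|.
Proof.
rewrite /chrom_eval big_mkcond /=.
transitivity (\sum_(k : {ffun V -> 'I_N}) \sum_(J : {set {set V}})
   (\prod_A (if A \in J then (if A \in edges then - (constk k A)%:R else 0) else 1))
    * \prod_v x (k v)).
  apply: eq_bigr => k _.
  rewrite (_ : (if _ then _ else _) = (proper_col e k)%:R * \prod_v x (k v)); last first.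
    by case: (proper_col e k); rewrite ?mul1r ?mul0r.
  by rewrite proper_ind bigA_distr mulr_suml.
rewrite exchange_big /= [RHS]big_mkcond /=; apply: eq_bigr => S _.
case: (boolP (S \subset edges)) => SE; last first.
  apply: big1 => k _; have /subsetPn [A AS AE] := SE.
  by rewrite (bigD1 A) //= AS (negPf AE) mul0r mul0r.
have Hk : forall k : {ffun V -> 'I_N},
    \prod_A (if A \in S then (if A \in edges then - (constk k A)%:R else 0) else 1)
    = (-1) ^+ #|S| * ([forall A in S, constk k A])%:R :> rat.
  move=> k; rewrite -big_mkcond /= -prod_ind -prodrN; apply: eq_bigr => A AS.
  by rewrite (subsetP SE _ AS).
transitivity (\sum_(k : {ffun V -> 'I_N}) (-1)^+#|S| * (([forall u, forall v, connect (rS S) u v ==> (k u == k v)])%:R * \prod_v x (k v))).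
  by apply: eq_bigr => k _; rewrite -(cc_equiv k SE) mulrA -Hk.
rewrite -mulr_sumr; congr (_ * _).
rewrite -(blocks_sum x j0 (cS_equiv S)) [RHS]big_mkcond /=; apply: eq_bigr => k _.
by case: ifP; rewrite ?mul1r ?mul0r.
Qed.
End Col.
End Graph.


Section PartNat.
Variables (V : finType) (P : {set {set V}}).
Hypothesis hP : partition P [set: V].

Lemma part_ne C : C \in P -> (0 < #|C|)%N.
Proof.
move=> CP; rewrite card_gt0; apply: contraTneq CP => ->.
by have /and3P[_ _ ->] := hP.
Qed.

Lemma sum_pred1 : (\sum_(C in P) (#|C|.-1) + #|P| = #|V|)%N.
Proof.
rewrite -cardsT (card_partition hP) -sum1_card -big_split /=.
by apply: eq_bigr => C CP; rewrite addn1 prednK // part_ne.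
Qed.

Lemma two_blocks m C1 : #|V| = (m + 4)%N -> #|P| = (m + 2)%N ->
  C1 \in P -> ~~ odd #|C1| ->
  exists C2, [/\ C2 \in P, C2 != C1, #|C1| = 2%N, #|C2| = 2%N &
     forall C, C \in P -> C != C1 -> C != C2 -> #|C| = 1%N].
Proof.
move=> hV hPc C1P ev1.
have hs : (\sum_(C in P) (#|C|.-1) = 2)%N.
  by have := sum_pred1; rewrite hV hPc; lia.
have c1pos := part_ne C1P.
move: hs; rewrite (bigD1 C1) //= => hs.
have c1 : #|C1| = 2%N.
  move: ev1 c1pos hs; case: #|C1| => [|[|[|[|k]]]] //= _ _; lia.
move: hs; rewrite c1 /= add1n => /eqP; rewrite eqSS => /eqP hs.
case: (pickP [pred C | (C \in P) && (C != C1) && (1 < #|C|)%N]) => [C2 /andP [/andP [C2P C2n] c2]|H]; last first.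
  move: hs; rewrite big1 // => C /andP [CP Cn]; have := H C; rewrite /= CP Cn /= => /negbT.
  by rewrite -leqNgt; case: #|C| => [|[|]].
move: hs; rewrite (bigD1 C2) /=; last by rewrite C2P.
move=> hs; have c2e : #|C2| = 2%N by move: c2 hs; case: #|C2| => [|[|[|k]]] //=; lia.
rewrite c2e /= in hs.
exists C2; split => // C CP Cn1 Cn2.
have : (\sum_(i | ((i \in P) && (i != C1)) && (i != C2)) (#|i|.-1) == 0)%N.
  by move: hs; rewrite add1n => /eqP; rewrite eqSS.
rewrite sum_nat_eq0 => /forallP/(_ C); rewrite CP Cn1 Cn2 /= => /eqP.
by have := part_ne CP; case: #|C| => [|[|]].
Qed.

Lemma prod_pred_const (I : finType) (p : pred I) (c : rat) :
  \prod_(i | p i) c = c ^+ #|[pred i | p i]|.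
Proof. by rewrite -prodr_const; apply: eq_bigl. Qed.

End PartNat.


Definition acoef (s r : nat) : rat := (s.+1)%:R + (-1) ^+ r.

Lemma acoefE s r : acoef s r = if odd r then s%:R else (s.+2)%:R.
Proof.
rewrite /acoef -signr_odd; case: (odd r); rewrite ?expr1 ?expr0.
  by rewrite -natr1 addrK.
by rewrite natr1.
Qed.

Section Graph2.
Variables (V : finType) (e : rel V).
Hypothesis sg : simple_graph e.

Local Notation P S := (@part V S).

Lemma partS (S : {set {set V}}) : partition (P S) [set: V].
Proof. have := @partP V _ (cS_equiv S). by rewrite /part. Qed.

Lemma pbR (S : {set {set V}}) u v : (v \in pblock (P S) u) = connect (rS S) u v.
Proof. have := @pblockR V _ (cS_equiv S) u v. rewrite /part. done. Qed.

Lemma pbP (S : {set {set V}}) u : pblock (P S) u \in P S.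
Proof. have := @pblockP V _ (cS_equiv S) u. by rewrite /part. Qed.

Lemma pbself (S : {set {set V}}) u : u \in pblock (P S) u.
Proof. have := @pblock_self V _ (cS_equiv S) u. by rewrite /part. Qed.

Lemma trivS (S : {set {set V}}) : trivIset (P S).
Proof. have := @trivP V _ (cS_equiv S). by rewrite /part. Qed.

Lemma ev_card (S : {set {set V}}) C1 C2 : S \subset edges e ->
  C1 \in P S -> C2 \in P S -> C2 != C1 -> #|C1| = 2%N -> #|C2| = 2%N ->
  (forall C, C \in P S -> C != C1 -> C != C2 -> #|C| = 1%N) ->
  #|S| = 2%N.
Proof.
move=> /subsetP SE C1P C2P C21 c1 c2 Hr.
have Cl1 : forall A, A \in S -> A = C1 \/ A = C2.
  move=> A AS; have /(edgesP sg) [u [v [_ uv defA]]] := SE _ AS.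
  have Cuv : connect (rS S) u v by apply: connect1; rewrite /rS -defA.
  set B := pblock (P S) u.
  have sAB : A \subset B.
    by rewrite defA; apply/subsetP => w /set2P [] ->; rewrite ?pbself ?pbR.
  have B2 : (2 <= #|B|)%N by have := subset_leq_card sAB; rewrite defA cards2 uv.
  have AB : A = B.
    apply/eqP; rewrite eqEcard sAB /= defA cards2 uv.
    case: (eqVneq B C1) => [->|n1]; first by rewrite c1.
    case: (eqVneq B C2) => [->|n2]; first by rewrite c2.
    by rewrite Hr // ?pbP in B2.
  rewrite AB; case: (eqVneq B C1) => [->|n1]; first by left.
  case: (eqVneq B C2) => [->|n2]; first by right.
  by have := Hr _ (pbP S u) n1 n2; move: B2 => /[swap] ->.
have C1S : forall C, C \in P S -> #|C| = 2%N -> C \in S.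
  move=> C CP /eqP /cards2P [u [v [uv defC]]].
  have pu : pblock (P S) u = C by apply: def_pblock; rewrite ?trivS // defC set21.
  have : connect (rS S) u v by rewrite -pbR pu defC set22.
  case/connectP => [[|w p] /= pth lst]; first by rewrite -lst eqxx in uv.
  case/andP: pth => ruw _.
  have := Cl1 _ ruw; set A := [set u; w] => hA.
  have uA : u \in A by rewrite set21.
  case: hA => hA.
    suff -> : C = C1 by rewrite -hA.
    by rewrite -pu; apply: def_pblock; rewrite ?trivS // -hA.
  suff -> : C = C2 by rewrite -hA.
  by rewrite -pu; apply: def_pblock; rewrite ?trivS // -hA.
have -> : S = [set C1; C2].
  apply/eqP; rewrite eqEsubset; apply/andP; split.
    by apply/subsetP => A /Cl1 [] ->; rewrite ?set21 ?set22.
  by apply/subsetP => A /set2P [] ->; apply: C1S.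
by rewrite cards2 eq_sym C21.
Qed.

Lemma ev_prod (S : {set {set V}}) C1 C2 m s :
  #|P S| = (m + 2)%N ->
  C1 \in P S -> C2 \in P S -> C2 != C1 -> #|C1| = 2%N -> #|C2| = 2%N ->
  (forall C, C \in P S -> C != C1 -> C != C2 -> #|C| = 1%N) ->
  \prod_(C in P S) acoef s #|C| = (s.+2)%:R ^+ 2 * s%:R ^+ m.
Proof.
move=> hP C1P C2P C21 c1 c2 Hr.
rewrite (bigD1 C1) //= (bigD1 C2) /=; last by rewrite C2P C21.
rewrite c1 c2 !acoefE /= mulrA -expr2; congr (_ * _).
rewrite (eq_bigr (fun _ => s%:R)); last first.
  by move=> C /andP [/andP [CP n1] n2]; rewrite Hr // acoefE.
rewrite prod_pred_const; congr (_ ^+ _).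
have h1 : #|[predD1 (P S) & C1]| = m.+1.
  have := cardD1 C1 (P S); rewrite C1P hP /= => h; lia.
have h2 : #|[predD1 [predD1 (P S) & C1] & C2]| = m.
  have := cardD1 C2 [predD1 (P S) & C1]; rewrite h1 !inE C21 C2P /= => h; rewrite add1n in h; by case: h.
rewrite -h2; apply: eq_card => C; rewrite !inE.
by case: (C \in P S); case: (C != C1); case: (C != C2).
Qed.

Lemma odd_prod (S : {set {set V}}) s :
  (forall C, C \in P S -> odd #|C|) ->
  \prod_(C in P S) acoef s #|C| = s%:R ^+ #|P S|.
Proof.
move=> H; rewrite -prodr_const; apply: eq_bigr => C CP.
by rewrite acoefE H.
Qed.

End Graph2.


Section S0.
Variables (V : finType) (e : rel V).
Hypothesis sg : simple_graph e.
Variables (a b c d : V).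
Hypotheses (eab : e a b) (ecd : e c d) (un : uniq [:: a; b; c; d]).
Definition S0 : {set {set V}} := [set [set a; b]; [set c; d]].
Local Notation P := (@part V S0).

Lemma ab : a != b. Proof. by apply: contraTneq un => ->; rewrite /= !inE eqxx. Qed.
Lemma ac : a != c. Proof. by apply: contraTneq un => ->; rewrite /= !inE eqxx ?orbT. Qed.
Lemma ad : a != d. Proof. by apply: contraTneq un => ->; rewrite /= !inE eqxx ?orbT. Qed.
Lemma bc : b != c. Proof. by apply: contraTneq un => ->; rewrite /= !inE eqxx ?orbT ?andbF. Qed.
Lemma bd : b != d. Proof. by apply: contraTneq un => ->; rewrite /= !inE eqxx ?orbT ?andbF. Qed.
Lemma cd : c != d. Proof. by apply: contraTneq un => ->; rewrite /= !inE eqxx ?orbT ?andbF. Qed.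

Lemma S0_sub : S0 \subset edges e.
Proof.
apply/subsetP => A /set2P [] ->; apply/(edgesP sg).
  by exists a, b; split => //; apply: ab.
by exists c, d; split => //; apply: cd.
Qed.

Lemma closed_fwd (X : {set V}) u w :
  (forall x y, rS S0 x y -> x \in X -> y \in X) -> connect (rS S0) u w -> u \in X -> w \in X.
Proof.
move=> H Cuw uX; have cl : closed (rS S0) (mem X) by apply: intro_closed; [exact: cS_sym|].
by rewrite -(closed_connect cl Cuw).
Qed.

Lemma rS0P x y : rS S0 x y -> [set x; y] = [set a; b] \/ [set x; y] = [set c; d].
Proof. by rewrite /rS => /set2P. Qed.

Lemma disj x : x \in [set a; b] -> x \in [set c; d] -> False.
Proof.
case/set2P => -> /set2P [] /eqP; apply/negP;
  by [apply: ac | apply: ad | apply: bc | apply: bd].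
Qed.

Lemma pb_ab : pblock P a = [set a; b].
Proof.
apply/setP => w; rewrite pbR; apply/idP/idP.
  move=> Caw; apply: (closed_fwd _ Caw); last by rewrite set21.
  move=> x y /rS0P [] H xX; first by rewrite -H set22.
  by case: (disj xX); rewrite -H set21.
by case/set2P => ->; [exact: connect0 | apply: connect1; rewrite /rS set21].
Qed.

Lemma pb_cd : pblock P c = [set c; d].
Proof.
apply/setP => w; rewrite pbR; apply/idP/idP.
  move=> Caw; apply: (closed_fwd _ Caw); last by rewrite set21.
  move=> x y /rS0P [] H xX; last by rewrite -H set22.
  by case: (disj (x := x)) => //; rewrite -H set21.
by case/set2P => ->; [exact: connect0 | apply: connect1; rewrite /rS set22].
Qed.

Lemma pb_single v : v \notin [set a; b] -> v \notin [set c; d] -> pblock P v = [set v].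
Proof.
move=> n1 n2; apply/setP => w; rewrite pbR; apply/idP/idP.
  move=> Cvw; apply: (closed_fwd _ Cvw); last by rewrite set11.
  move=> x y /rS0P [] H /set1P xv; subst x.
    by move: n1; rewrite -H set21.
  by move: n2; rewrite -H set21.
by move/set1P => ->; exact: connect0.
Qed.

Lemma S0_part m : #|V| = (m + 4)%N -> #|P| = (m + 2)%N /\ exists2 C, C \in P & ~~ odd #|C|.
Proof.
move=> hV; split; last first.
  by exists (pblock P a); rewrite ?pbP // pb_ab cards2 ab.
have hs := sum_pred1 (partS S0); rewrite hV in hs.
suff : (\sum_(C in P) (#|C|.-1) = 2)%N by move=> h; rewrite h in hs; have hs2 : (2 + #|P| = m + 4)%N := hs; lia.
rewrite (bigD1 (pblock P a)) ?pbP //= (bigD1 (pblock P c)) /=; last first.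
  rewrite pbP pb_ab pb_cd /=; apply/negP => /eqP H.
  by case: (disj (x := a)); rewrite ?set21 // H set21.
rewrite pb_ab pb_cd !cards2 ab cd /= big1 // => C /andP [/andP [CP n1] n2].
have /set0Pn [v vC] : C != set0 by rewrite -card_gt0 (part_ne (partS S0)).
have defC : pblock P v = C by apply: def_pblock; rewrite ?trivS.
case: (boolP (v \in [set a; b])) => va.
  by move: n1; rewrite -defC -pb_ab; rewrite (def_pblock (trivS S0) (pbP S0 a)) ?eqxx // pb_ab.
case: (boolP (v \in [set c; d])) => vc.
  by move: n2; rewrite -defC -pb_cd; rewrite (def_pblock (trivS S0) (pbP S0 c)) ?eqxx // pb_cd.
by rewrite -defC pb_single // cards1.
Qed.

End S0.


Definition xpt (s t : nat) : 'I_((s.+1) * t + t) -> rat :=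
  fun j => if (j < (s.+1) * t)%N then 1 else -1.
Arguments xpt : clear implicits.

Lemma pow_xp s t r : pow_sum (xpt s t) r = acoef s r * t%:R.
Proof.
rewrite /pow_sum big_split_ord /=.
rewrite (eq_bigr (fun _ => 1)); last first.
  by move=> i _; rewrite /xpt /= ltn_ord expr1n.
rewrite [X in _ + X](eq_bigr (fun _ => (-1) ^+ r)); last first.
  by move=> i _; rewrite /xpt /= ltnNge leq_addr.
rewrite !sumr_const !card_ord /acoef mulrDl -natrM mulr_natr.
by [].
Qed.

Lemma pow_xpN s t r : pow_sum (fun j => - xpt s t j) r = ((-1) ^+ r * acoef s r) * t%:R.
Proof.
rewrite /pow_sum (eq_bigr (fun j => (-1) ^+ r * xpt s t j ^+ r)); last first.
  by move=> j _; rewrite [LHS]exprNn.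
by rewrite -mulrA -pow_xp /pow_sum mulr_sumr.
Qed.

Lemma chrom_neg (V : finType) (e : rel V) N (x : 'I_N -> rat) :
  chrom_eval e (fun j => - x j) = (-1) ^+ #|V| * chrom_eval e x.
Proof.
rewrite /chrom_eval mulr_sumr; apply: eq_bigr => k _.
by rewrite prodrN.
Qed.

Section Main1.
Variables (V : finType) (e : rel V).
Hypothesis sg : simple_graph e.

Definition Canon (s : nat) : {poly rat} :=
  \sum_(S : {set {set V}} | S \subset edges e)
     ((-1) ^+ #|S| * \prod_(C in part S) acoef s #|C|) *: 'X^#|part S|.

Lemma chrom_xpt s t : (0 < t)%N -> chrom_eval e (xpt s t) = (Canon s).[t%:R].
Proof.
move=> t0.
have j0 : 'I_((s.+1) * t + t) by exists 0%N; rewrite addn_gt0 t0 orbT.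
rewrite (chrom_expand sg _ j0) /Canon horner_sum; apply: eq_bigr => S _.
rewrite hornerZ hornerXn -mulrA; congr (_ * _).
transitivity (\prod_(C in part S) (acoef s #|C| * t%:R)); first by apply: eq_bigr => C _; rewrite pow_xp.
by rewrite big_split /= prodr_const.
Qed.

Lemma Canon_coef s j : (Canon s)`_j =
  \sum_(S : {set {set V}} | S \subset edges e)
     ((-1) ^+ #|S| * \prod_(C in part S) acoef s #|C|) * (#|part S| == j)%:R.
Proof.
rewrite /Canon coef_sum; apply: eq_bigr => S _.
by rewrite coefZ coefXn eq_sym.
Qed.


Section Key.
Variables (F Q : psum).
Hypotheses (repF : represents_XG e F) (Qodd : all (fun t => all odd t.2) Q)
  (QF : forall N (x : 'I_N -> rat), psum_eval x Q = psum_eval x (psum_near F)).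

Lemma key s j : (0 < s)%N -> ~~ odd (j + #|V|) ->
  (Canon s)`_j = s%:R ^+ j * \sum_(u <- Q) u.1 * (size u.2 == j)%:R.
Proof.
move=> s0 hj.
pose HF := polyF F (acoef s).
pose HG := polyF F (fun r => (-1) ^+ r * acoef s r).
have eF : HF = Canon s.
  apply: poly_eq_nat => t t0.
  by rewrite -(psum_eval_polyF _ (pow_xp s t)) repF.2 chrom_xpt.
have eG : HG = (-1) ^+ #|V| *: HF.
  apply: poly_eq_nat => t t0.
  rewrite hornerZ -(psum_eval_polyF _ (pow_xpN s t)) -(psum_eval_polyF _ (pow_xp s t)).
  by rewrite !repF.2 chrom_neg.
have eO : forall t : nat, psum_eval (xpt s t) (psum_omega F) = HG.[- t%:R].
  move=> t; rewrite omega_eval polyF_horner big_seq_cond [RHS]big_seq_cond.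
  apply: eq_bigr => u /andP [uF _]; congr (_ * _).
  rewrite big_seq_cond [RHS]big_seq_cond; apply: eq_bigr => r /andP [ru _].
  have : (0 < r)%N by have /allP := repF.1; move=> /(_ u uF) /allP /(_ r ru).
  case: r ru => // r _ _; rewrite pow_xp exprS /=; ring.
pose R := \poly_(i < size HF) ((-1) ^+ (i + #|V|) * HF`_i).
have eR : forall t, R.[t] = HG.[- t].
  move=> t; rewrite horner_poly eG hornerZ horner_coef mulr_sumr.
  apply: eq_bigr => i _; rewrite exprD (exprNn t); ring.
have eQ : polyF Q (acoef s) = 2%:R^-1 *: (HF + R).
  apply: poly_eq_nat => t t0.
  rewrite -(psum_eval_polyF _ (pow_xp s t)) QF near_eval eO -eR.
  rewrite hornerZ hornerD (psum_eval_polyF _ (pow_xp s t)) mulrC.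
  by [].
have eQ2 : polyF Q (acoef s) = polyF Q (fun _ => s%:R).
  rewrite /polyF big_seq_cond [RHS]big_seq_cond; apply: eq_bigr => u /andP [uQ _].
  congr (_ *: _); rewrite big_seq_cond [RHS]big_seq_cond; apply: eq_bigr => r /andP [ru _].
  have : odd r by have /allP := Qodd; move=> /(_ u uQ) /allP /(_ r ru).
  by rewrite acoefE => ->.
have := congr1 (fun p : {poly rat} => p`_j) eQ; rewrite /= eQ2 polyF_const_coef => ->.
rewrite coefZ coefD coef_poly -eF.
case: ifP => hs.
  by rewrite -signr_odd (negPf hj) expr0 mul1r; field.
rewrite nth_default; last by rewrite leqNgt hs.
by field.
Qed.
End Key.
End Main1.


Section Part1.
Variables (V : finType) (e : rel V) (F : psum).
Hypotheses (sg : simple_graph e) (repF : represents_XG e F).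

Definition ev (S : {set {set V}}) := [exists C in part S, ~~ odd #|C|].

Lemma dec m s :
  (m + 4)%N = #|V| ->
  (Canon e s)`_(m + 2) =
  (\sum_(S : {set {set V}} | ((S \subset edges e) && (#|part S| == m + 2)%N) && ev S) 1)
      * ((s.+2)%:R ^+ 2 * s%:R ^+ m)
  + (\sum_(S : {set {set V}} | ((S \subset edges e) && (#|part S| == m + 2)%N) && ~~ ev S)
      (-1) ^+ #|S|) * s%:R ^+ (m + 2).
Proof.
move=> hV.
rewrite Canon_coef (bigID (fun S : {set {set V}} => #|part S| == (m + 2)%N)) /=.
rewrite [X in _ + X]big1 ?addr0; last by move=> S /andP [_ /negPf ->]; rewrite mulr0.
rewrite (bigID ev) /= !mulr_suml; congr (_ + _); apply: eq_bigr => S /andP [/andP [SE /eqP hP] hev].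
  rewrite hP eqxx mulr1 mul1r.
  case/existsP: hev => C1 /andP [C1P oC1].
  have [C2 [C2P C21 c1 c2 Hr]] := two_blocks (partS S) ((sym_eq hV)) hP C1P oC1.
  by rewrite (ev_card sg SE C1P C2P C21 c1 c2 Hr) (ev_prod s hP C1P C2P C21 c1 c2 Hr) expr2 mulN1r opprK mul1r.
rewrite hP eqxx mulr1 odd_prod ?hP // => C CP.
by apply: contraNT hev => oC; apply/existsP; exists C; rewrite CP oC.
Qed.


Lemma no_disj : in_Gamma (psum_near F) -> ~ has_disjoint_edges e.
Proof.
case=> Q [Qodd QF] [a [b [c [d [eab ecd un]]]]].
have h4 : (4 <= #|V|)%N.
  by have := max_card (mem [:: a; b; c; d]); rewrite (card_uniqP un).
pose m := (#|V| - 4)%N.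
have hV : (m + 4)%N = #|V| by rewrite /m; lia.
have hj : ~~ odd ((m + 2) + #|V|).
  by rewrite -hV (_ : (m + 2 + (m + 4) = (m + 3).*2)%N) ?odd_double // -addnn; lia.
set A := \sum_(S : {set {set V}} | ((S \subset edges e) && (#|part S| == m + 2)%N) && ev S) (1 : rat).
set B := \sum_(S : {set {set V}} | ((S \subset edges e) && (#|part S| == m + 2)%N) && ~~ ev S)
      ((-1) ^+ #|S| : rat).
set g := \sum_(u <- Q) u.1 * (size u.2 == (m + 2)%N)%:R.
have E1 := key sg repF Qodd QF (s := 1) (j := (m + 2)%N) isT hj.
have E2 := key sg repF Qodd QF (s := 2) (j := (m + 2)%N) isT hj.
rewrite (dec 1 hV) -/A -/B -/g in E1; rewrite (dec 2 hV) -/A -/B -/g in E2.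
have A1 : 1 <= A.
  have [hP hev] := S0_part eab ecd un ((sym_eq hV)).
  rewrite /A (bigD1 (S0 a b c d)) /=; last first.
    by rewrite (S0_sub sg eab ecd un) hP eqxx /=; case: hev => C CP oC; apply/existsP; exists C; rewrite CP.
  by rewrite lerDl sumr_ge0.
have y0 : (2%:R : rat) ^+ m != 0 by rewrite expf_neq0.
move: E1 E2; rewrite !expr1n !mulr1 mul1r exprD => E1.
rewrite -E1 => E2.
have : 20%:R * A * 2%:R ^+ m = 0 :> rat.
  have -> : 20%:R * A * 2%:R ^+ m = 2%:R ^+ m * 2%:R ^+ 2 * (A * 3%:R ^+ 2 + B)
      - (A * (4%:R ^+ 2 * 2%:R ^+ m) + B * (2%:R ^+ m * 2%:R ^+ 2)) :> rat by ring.
  by rewrite E2 subrr.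
apply/eqP; rewrite !mulf_eq0 negb_or y0 andbT; apply/negP => /orP [//|/eqP A0].
by move: A1; rewrite A0 ler10.
Qed.

End Part1.


Section Part2.
Variables (V : finType) (e : rel V).
Hypothesis sg : simple_graph e.
Hypothesis nd : ~ has_disjoint_edges e.
Hypothesis conn : connected_graph e.

Lemma irr u : e u u = false. Proof. by case: sg => H _; apply: H. Qed.
Lemma esymm u v : e u v = e v u. Proof. by case: sg => _ H; apply: H. Qed.
Lemma eneq u v : e u v -> u != v.
Proof. by move=> h; apply: contraTneq h => ->; rewrite irr. Qed.

Lemma uniq4 (a b c d : V) : a != b -> a != c -> a != d -> b != c -> b != d -> c != d ->
  uniq [:: a; b; c; d].
Proof.
move=> ab ac ad bc bd cd.
by rewrite /= !inE (negPf ab) (negPf ac) (negPf ad) (negPf bc) (negPf bd) (negPf cd).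
Qed.

Lemma nd4 a b c d : e a b -> e c d -> a != c -> a != d -> b != c -> b != d -> False.
Proof.
move=> eab ecd ac ad bc bd; apply: nd; exists a, b, c, d; split => //.
by apply: uniq4 => //; apply: eneq.
Qed.

Lemma first_step v a : v != a -> exists w, e v w.
Proof.
move=> va; case: conn => _ /(_ v a) /connectP [[|w p] /= pth lst].
  by rewrite lst eqxx in va.
by exists w; case/andP: pth.
Qed.

Lemma star_of c : (forall u v, e u v -> u = c \/ v = c) -> is_star e.
Proof.
move=> H; exists c => u v; apply/idP/idP.
  move=> euv; rewrite (eneq euv) /=.
  by case: (H _ _ euv) => ->; rewrite eqxx ?orbT.
case/andP => uv /orP [/eqP uc|/eqP vc].
  subst u; have vc : v != c by rewrite eq_sym.
  have [w evw] := first_step vc.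
  case: (H _ _ evw) => [vc'|wc]; first by rewrite vc' eqxx in vc.
  by subst w; rewrite esymm.
subst v; have [w euw] := first_step uv.
case: (H _ _ euw) => [uc|wc]; last by subst w.
by rewrite uc eqxx in uv.
Qed.

Lemma part2 : is_triangle e \/ is_star e.
Proof.
case: (pickP (fun p : V * V => e p.1 p.2)) => [[a b] /= eab|none]; last first.
  case: conn => /card_gt0P [v0 _] _; right; apply: (star_of (c := v0)) => u v euv.
  by have := none (u, v); rewrite /= euv.
have ab := eneq eab.
case: (boolP [forall u, forall v, e u v ==> (u == a) || (v == a)]) => [Ha|Ha].
  right; apply: (star_of (c := a)) => u v euv.
  by have /forallP/(_ v)/implyP/(_ euv)/orP [/eqP|/eqP] := (forallP Ha) u; [left|right].
case: (boolP [forall u, forall v, e u v ==> (u == b) || (v == b)]) => [Hb|Hb].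
  right; apply: (star_of (c := b)) => u v euv.
  by have /forallP/(_ v)/implyP/(_ euv)/orP [/eqP|/eqP] := (forallP Hb) u; [left|right].
left.
have [c [ebc ca]] : exists c, e b c /\ c != a.
  case/forallPn: Ha => u /forallPn [v]; rewrite negb_imply negb_or => /andP [euv /andP [ua va]].
  case: (eqVneq u b) => [ub|ub].
    by subst u; exists v.
  case: (eqVneq v b) => [vb|vb].
    by subst v; exists u; rewrite esymm.
  by case: (nd4 eab euv) => //; rewrite eq_sym.
have [d [ead db]] : exists d, e a d /\ d != b.
  case/forallPn: Hb => u /forallPn [v]; rewrite negb_imply negb_or => /andP [euv /andP [ub vb]].
  case: (eqVneq u a) => [ua|ua].
    by subst u; exists v.
  case: (eqVneq v a) => [va|va].
    by subst v; exists u; rewrite esymm.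
  by case: (nd4 eab euv) => //; rewrite eq_sym.
have bc := eneq ebc.
have ad := eneq ead.
have cd : c = d.
  apply/eqP; apply/negPn/negP => cd.
  by case: (nd4 ebc ead) => //; rewrite 1?eq_sym.
subst d.
have cb : c != b by rewrite eq_sym.
have ac : a != c := ad.
have inV : forall w, w \in [set a; b; c].
  move=> w; apply/negPn/negP; rewrite !inE !negb_or => /andP [/andP [wa wb] wc].
  have [y ewy] := first_step wa.
  have wy := eneq ewy.
  case: (eqVneq y a) => [ya|ya].
    by subst y; case: (nd4 ewy ebc).
  case: (eqVneq y b) => [yb|yb].
    by subst y; case: (nd4 ewy ead) => //; rewrite eq_sym.
  case: (eqVneq y c) => [yc|yc].
    by subst y; case: (nd4 ewy eab) => //; rewrite eq_sym.
  by case: (nd4 ewy eab).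
split.
  rewrite -cardsT (_ : [set: V] = [set a; b; c]); last first.
    by apply/setP => w; rewrite in_setT inV.
  have -> : [set a; b; c] = a |: [set b; c] by apply/setP => w; rewrite !inE orbA.
  by rewrite cardsU1 cards2 !inE (negPf ab) (negPf ac) bc.
move=> u v; have := inV u; have := inV v; rewrite !inE.
move=> /orP [/orP [] | ] /eqP -> /orP [/orP [] | ] /eqP ->;
  rewrite ?irr ?eqxx ?eab ?ebc ?ead // ?(esymm b a) ?(esymm c b) ?(esymm c a) ?eab ?ebc ?ead //
    ?(eq_sym b a) ?(eq_sym c b) ?(eq_sym c a) ?ab ?bc ?ac //.
Qed.
End Part2.

End Helpers.

Theorem mainTheorem3 (V : finType) (e : rel V) (F : psum) :
  simple_graph e ->
  represents_XG e F ->
  in_Gamma (psum_near F) ->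
  ~ has_disjoint_edges e /\
  (connected_graph e -> is_triangle e \/ is_star e).
Proof.
move=> sg repF hG.
have nd := Helpers.no_disj sg repF hG.
split => // conn.
exact: Helpers.part2 sg nd conn.
Qed.
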